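(* Let $\mathbb{K}\in\{\mathbb{C},\mathbb{R}\}$, let $f=(f_1,f_2):\mathbb{K}^2\to\mathbb{K}^2$ be a dominant polynomial map whose components have non-zero constant terms, and let $\Gamma$ be an edge of $A=\mathsf{NP}(f_1)\oplus\mathsf{NP}(f_2)$. Then the set $\mathtt{TF}_{\mathbb{K}}(\Gamma)$ does not depend on the choice of $U\in\mathcal{T}_\Gamma$ used in its definition: for any $U,U'\in\mathcal{T}_\Gamma$, the sets $\mathtt{TF}_{\mathbb{K}}(\Gamma)$ defined using $\overline{U}$ and using $\overline{U'}$ coincide.
   Context: Standing setting. $\mathbb{K}^*=\mathbb{K}\setminus\{0\}$. $f=(f_1,f_2)$ with $f_i\in\mathbb{K}[x_1,x_2]$ is dominant and $f_1,f_2$ have non-zero constant terms. The Newton polytope $\mathsf{NP}(P)$ of $P=\sum c_a x^a$ is the convex hull of $\{a: c_a\neq0\}$. $A_i=\mathsf{NP}(f_i)$, $A=A_1\oplus A_2$. The face of a polygon $P$ supported by nonzero $\alpha\in\mathbb{R}^2$ is the set of minimizers of $\langle\alpha,\cdot\rangle$ on $P$. An edge $\Gamma$ of $A$ is a 1-dimensional face; with $\alpha$ supporting it, $\Gamma=\Gamma_1\oplus\Gamma_2$ where $\Gamma_i$ is the face of $A_i$ supported by $\alpha$. $\Gamma$-toric transformations. Let $a_1$ be a vertex of $\Gamma$ of minimal Euclidean norm, $v$ the primitive integer vector from $a_1$ along $\Gamma$, and $w\in\mathbb{Z}^2$ such that $(v,w)$ is a basis of $\mathbb{Z}^2$ and $A-a_1\subset\{b_1v+b_2w:b_1,b_2\ge0\}$.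 With $T$ the matrix with rows $v,w$, put $U=(T^{-1})^\top$; $\mathcal{T}_\Gamma$ is the set of all such $U$. $U$ maps $\sum c_ax^a$ to $\sum c_a z^{Ua}$. With $\gamma_i$ the vertices of $\Gamma_i$ such that $\gamma_1+\gamma_2=a_1$, set $\overline{U}(f-y):=\big(U(x^{-\gamma_1}(f_1-y_1)),U(x^{-\gamma_2}(f_2-y_2))\big)\in\mathbb{K}[z_1,z_2]^2$. $\mathtt{T}$-multiplicity sets. $\mathrm{Sol}_{\mathbb{K}}(\Gamma)$ is the set of $\rho\in\mathbb{K}^*$ such that $(\rho,0)$ is a common zero of $\overline{U}(f-\tilde y)$ for some $\tilde y\in\mathbb{K}^2$. For $\rho\in\mathrm{Sol}_{\mathbb{K}}(\Gamma)$, $\mathtt{TF}^{\rho}_{\mathbb{K}}(\Gamma)$ is the Euclidean closure of the set of $y\in\mathbb{K}^2$ such that $\overline{U}(f-y)(\rho,0)=0$ and there exist sequences $\varrho_k\in(\mathbb{K}^* )^2$, $y_k\in\mathbb{K}^2$ with $\varrho_k\to(\rho,0)$, $y_k\to y$ and $\overline{U}(f-y_k)(\varrho_k)=0$. Finally $\mathtt{TF}_{\mathbb{K}}(\Gamma)=\bigcup_{\rho\in\mathrm{Sol}_{\mathbb{K}}(\Gamma)}\mathtt{TF}^{\rho}_{\mathbb{K}}(\Gamma)$. *)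

(* Defs.v *)
From HB Require Import structures.
From mathcomp Require Import all_boot all_order all_algebra.
From mathcomp Require Import reals complex.
Set Implicit Arguments. Unset Strict Implicit. Unset Printing Implicit Defensive.
Import Order.TTheory GRing.Theory Num.Theory.
Local Open Scope ring_scope.

Definition Kfield (R : realType) (isC : bool) : numFieldType :=
  if isC then (R[i] : numFieldType) else (R : numFieldType).

Section Defs.
Variable K : numFieldType.

(* p : {poly {poly K}} encodes sum_(i,j) c_(i,j) x1^i x2^j with
   c_(i,j) = p`_j`_i  (outer variable = x2, inner variable = x1). *)
Definition coef2 (p : {poly {poly K}}) (a : nat * nat) : K := p`_a.2`_a.1.

Definition eval2 (p : {poly {poly K}}) (x : K * K) : K := (p.[x.2%:P]).[x.1].

(* f = (f1,f2) : K^2 -> K^2 is dominant: its image is Zariski dense, i.e. no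
   nonzero polynomial vanishes on the image. *)
Definition dominant (f1 f2 : {poly {poly K}}) : Prop :=
  forall g : {poly {poly K}}, g != 0 ->
    exists x : K * K, eval2 g (eval2 f1 x, eval2 f2 x) != 0.

Definition cvgK (u : nat -> K) (l : K) : Prop :=
  forall e : K, 0 < e -> exists N : nat, forall n : nat, (N <= n)%N -> `|u n - l| < e.

Definition closure2 (S : K * K -> Prop) (y : K * K) : Prop :=
  forall e : K, 0 < e -> exists s, S s /\ `|s.1 - y.1| < e /\ `|s.2 - y.2| < e.

Definition Uapp (U : 'M[int]_2) (a : int * int) : int * int :=
  (U 0 0 * a.1 + U 0 1 * a.2, U 1 0 * a.1 + U 1 1 * a.2).

(* Evaluation at z of  U(x^{-g} (p - y)) = sum_a c_a z^{U(a - g)},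
   where c_a are the coefficients of p - y. *)
Definition Ubar_eval (U : 'M[int]_2) (g : nat * nat) (p : {poly {poly K}})
    (y : K) (z : K * K) : K :=
  let q := p - (y%:P)%:P in
  \sum_(j < size q) \sum_(i < size q`_j)
     q`_j`_i * (let e := Uapp U ((i%:Z - g.1%:Z), (j%:Z - g.2%:Z)) in
                z.1 ^ e.1 * z.2 ^ e.2).

Definition Ubar_zero (U : 'M[int]_2) (g1 g2 : nat * nat)
    (f1 f2 : {poly {poly K}}) (y : K * K) (z : K * K) : Prop :=
  Ubar_eval U g1 f1 y.1 z = 0 /\ Ubar_eval U g2 f2 y.2 z = 0.

Definition Sol (U : 'M[int]_2) g1 g2 f1 f2 (rho : K) : Prop :=
  rho != 0 /\ exists yt : K * K, Ubar_zero U g1 g2 f1 f2 yt (rho, 0).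

Definition TFrho (U : 'M[int]_2) g1 g2 f1 f2 (rho : K) : K * K -> Prop :=
  closure2 (fun y => Ubar_zero U g1 g2 f1 f2 y (rho, 0) /\
    exists (vr : nat -> K * K) (ys : nat -> K * K),
      (forall k, (vr k).1 != 0 /\ (vr k).2 != 0) /\
      cvgK (fun k => (vr k).1) rho /\ cvgK (fun k => (vr k).2) 0 /\
      cvgK (fun k => (ys k).1) y.1 /\ cvgK (fun k => (ys k).2) y.2 /\
      (forall k, Ubar_zero U g1 g2 f1 f2 (ys k) (vr k))).

Definition TF (U : 'M[int]_2) g1 g2 f1 f2 (y : K * K) : Prop :=
  exists rho, Sol U g1 g2 f1 f2 rho /\ TFrho U g1 g2 f1 f2 rho y.

End Defs.

Section Geometry.
Variable R : realType.
Local Notation pt := (R * R)%type.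

Definition dot (a b : pt) : R := a.1 * b.1 + a.2 * b.2.
Definition emb (a : nat * nat) : pt := (a.1%:R, a.2%:R).
Definition embZ (a : int * int) : pt := (a.1%:~R, a.2%:~R).

Definition conv (S : pt -> Prop) (x : pt) : Prop :=
  exists (n : nat) (l : 'I_n -> R) (p : 'I_n -> pt),
    (forall i, 0 <= l i) /\ \sum_i l i = 1 /\ (forall i, S (p i)) /\
    x = (\sum_i l i * (p i).1, \sum_i l i * (p i).2).

Definition NP (K : numFieldType) (p : {poly {poly K}}) : pt -> Prop :=
  conv (fun x => exists a, coef2 p a != 0 /\ x = emb a).

Definition msum (P Q : pt -> Prop) (x : pt) : Prop :=
  exists p q, P p /\ Q q /\ x = (p.1 + q.1, p.2 + q.2).

Definition face (P : pt -> Prop) (alpha : pt) (x : pt) : Prop :=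
  P x /\ forall y, P y -> dot alpha x <= dot alpha y.

Definition is_edge (P : pt -> Prop) (alpha : pt) : Prop :=
  alpha != (0, 0) /\ exists x y, face P alpha x /\ face P alpha y /\ x <> y.

Definition is_vertex (P : pt -> Prop) (x : pt) : Prop :=
  P x /\ forall y z (t : R), P y -> P z -> 0 < t < 1 ->
    x = (t * y.1 + (1 - t) * z.1, t * y.2 + (1 - t) * z.2) -> y = z.

Definition norm2 (x : pt) : R := x.1 ^+ 2 + x.2 ^+ 2.

Definition Tmat (v w : int * int) : 'M[int]_2 :=
  \matrix_(i < 2, j < 2)
     (if i == 0 then (if j == 0 then v.1 else v.2)
      else (if j == 0 then w.1 else w.2)).

Definition TGamma (A Gamma : pt -> Prop) (a1 : nat * nat) (U : 'M[int]_2) : Prop :=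
  exists v w : int * int,
    gcdz v.1 v.2 = 1 /\
    (exists t : R, 0 < t /\
       Gamma ((emb a1).1 + t * (embZ v).1, (emb a1).2 + t * (embZ v).2)) /\
    (v.1 * w.2 - v.2 * w.1 = 1 \/ v.1 * w.2 - v.2 * w.1 = -1) /\
    (forall x, A x -> exists b1 b2 : R, 0 <= b1 /\ 0 <= b2 /\
       x.1 - (emb a1).1 = b1 * (embZ v).1 + b2 * (embZ w).1 /\
       x.2 - (emb a1).2 = b1 * (embZ v).2 + b2 * (embZ w).2) /\
    U = (invmx (Tmat v w))^T.

End Geometry.

(* Main.v *)
Require Import Defs.
From HB Require Import structures.
From mathcomp Require Import all_boot all_order all_algebra.
From mathcomp Require Import reals complex ring lra zify.
Import Order.TTheory GRing.Theory Num.Theory.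
Local Open Scope ring_scope.
Set Implicit Arguments. Unset Strict Implicit.

Lemma Uapp_coord (v w d : int * int) (U : 'M[int]_2) :
  (v.1 * w.2 - v.2 * w.1 = 1 \/ v.1 * w.2 - v.2 * w.1 = -1) ->
  U = (invmx (Tmat v w))^T ->
  d.1 = (Uapp U d).1 * v.1 + (Uapp U d).2 * w.1 /\
  d.2 = (Uapp U d).1 * v.2 + (Uapp U d).2 * w.2.
Proof.
move=> hdet ->.
set s := v.1 * w.2 - v.2 * w.1.
have ss : s * s = 1 by rewrite /s; case: hdet => ->.
pose B : 'M[int]_2 := \matrix_(i < 2, j < 2)
  (if i == 0 then (if j == 0 then s * w.2 else - s * v.2)
   else (if j == 0 then - s * w.1 else s * v.1)).
have TB : Tmat v w *m B = 1%:M.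
  apply/matrixP => i j; rewrite !mxE !big_ord_recr big_ord0 /= add0r !mxE /=.
  case: i => [[|[|//]] ?]; case: j => [[|[|//]] ?] /=;
    idtac.
  all: try (rewrite -ss /s; ring). all: idtac.
have [uT _] := mulmx1_unit TB.
have -> : invmx (Tmat v w) = B.
  by rewrite -[B](mulKmx uT) TB mulmx1.
rewrite /Uapp /= !mxE /=.
split; rewrite -[LHS]mul1r -{1}ss /s; ring.
Qed.
Lemma uniq2 (R : idomainType) (c1 c2 v1 v2 w1 w2 : R) :
  v1 * w2 - v2 * w1 != 0 -> c1 * v1 + c2 * w1 = 0 -> c1 * v2 + c2 * w2 = 0 ->
  c1 = 0 /\ c2 = 0.
Proof.
move=> hd h1 h2.
have e1 : c1 * (v1 * w2 - v2 * w1) = w2 * (c1 * v1 + c2 * w1) - w1 * (c1 * v2 + c2 * w2) by ring.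
have e2 : c2 * (v1 * w2 - v2 * w1) = v1 * (c1 * v2 + c2 * w2) - v2 * (c1 * v1 + c2 * w1) by ring.
rewrite h1 h2 !mulr0 subr0 in e1 e2.
by move/eqP: e1; move/eqP: e2; rewrite !mulf_eq0 (negbTE hd) !orbF => /eqP -> /eqP ->.
Qed.

Section G.
Variable R : realType.

Lemma face_dir (P : R * R -> Prop) alpha x u t :
  face P alpha x -> face P alpha (x.1 + t * u.1, x.2 + t * u.2) -> 0 < t ->
  alpha.1 * u.1 + alpha.2 * u.2 = 0.
Proof.
move=> [Px hx] [Py hy] t0.
have h1 := hx _ Py; have h2 := hy _ Px.
move: h1 h2; rewrite /dot /=.
have -> : alpha.1 * (x.1 + t * u.1) + alpha.2 * (x.2 + t * u.2) =
   alpha.1 * x.1 + alpha.2 * x.2 + t * (alpha.1 * u.1 + alpha.2 * u.2) by ring.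
move=> h1 h2.
have : t * (alpha.1 * u.1 + alpha.2 * u.2) = 0 by lra.
by move/eqP; rewrite mulf_eq0 gt_eqF //= => /eqP.
Qed.

Lemma perp_det (alpha u u' : R * R) : alpha != (0, 0) ->
  alpha.1 * u.1 + alpha.2 * u.2 = 0 -> alpha.1 * u'.1 + alpha.2 * u'.2 = 0 ->
  u.1 * u'.2 - u.2 * u'.1 = 0.
Proof.
move=> ha h1 h2.
have e1 : alpha.1 * (u.1 * u'.2 - u.2 * u'.1) = u'.2 * (alpha.1 * u.1 + alpha.2 * u.2) - u.2 * (alpha.1 * u'.1 + alpha.2 * u'.2) by ring.
have e2 : alpha.2 * (u.1 * u'.2 - u.2 * u'.1) = u.1 * (alpha.1 * u'.1 + alpha.2 * u'.2) - u'.1 * (alpha.1 * u.1 + alpha.2 * u.2) by ring.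
rewrite h1 h2 !mulr0 subr0 in e1 e2.
move/eqP: e1; move/eqP: e2; rewrite !mulf_eq0.
case/orP => [/eqP a2|/eqP //]; case/orP => [/eqP a1|/eqP //].
by move: ha; rewrite [alpha]surjective_pairing a1 a2 eqxx.
Qed.

Lemma vertex_dir (G : R * R -> Prop) x u t s :
  is_vertex G x -> G (x.1 + t * u.1, x.2 + t * u.2) ->
  G (x.1 + s * u.1, x.2 + s * u.2) -> 0 < t -> s < 0 -> u = (0, 0).
Proof.
move=> [_ hv] Gy Gz t0 s0.
have ts : t - s != 0 by rewrite gt_eqF // subr_gt0 (lt_trans s0 t0).
pose l := - s / (t - s).
have l0 : 0 < l < 1.
  rewrite /l; apply/andP; split.
    by apply: divr_gt0; lra.
  by rewrite ltr_pdivrMr; lra.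
have hl : l * t + (1 - l) * s = 0.
  rewrite /l; field; exact: ts.
have E : (x.1 + t * u.1, x.2 + t * u.2) = (x.1 + s * u.1, x.2 + s * u.2).
  apply: (hv _ _ l Gy Gz l0); rewrite [x in LHS]surjective_pairing.
  congr pair.
    transitivity (x.1 + (l * t + (1 - l) * s) * u.1); first by rewrite hl mul0r addr0.
    simpl; ring.
  transitivity (x.2 + (l * t + (1 - l) * s) * u.2); first by rewrite hl mul0r addr0.
  simpl; ring.
case: E => /addrI e1 /addrI e2.
have : (t - s) * u.1 = 0 by rewrite mulrBl e1 subrr.
have : (t - s) * u.2 = 0 by rewrite mulrBl e2 subrr.
move/eqP; rewrite mulf_eq0 (negbTE ts) /= => /eqP h2.
move/eqP; rewrite mulf_eq0 (negbTE ts) /= => /eqP h1.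
by case: u h1 h2 {Gy Gz e1 e2} => /= ? ? -> ->.
Qed.


Lemma gcd_nz (v : int * int) : gcdz v.1 v.2 = 1 -> v.1 != 0 \/ v.2 != 0.
Proof.
case: v => a b /=; case: (eqVneq a 0) => [->|]; last by left.
case: (eqVneq b 0) => [->|]; last by right.
by rewrite /gcdz.
Qed.

Lemma embZ0 (v : int * int) : embZ R v = (0, 0) -> v.1 = 0 /\ v.2 = 0.
Proof.
rewrite /embZ; case=> /eqP h1 /eqP h2.
by move: h1 h2; rewrite !intr_eq0 => /eqP -> /eqP ->.
Qed.

Lemma decomp (v w d : int * int) :
  (v.1 * w.2 - v.2 * w.1 = 1 \/ v.1 * w.2 - v.2 * w.1 = -1) ->
  exists c1 c2 : int, d.1 = c1 * v.1 + c2 * w.1 /\ d.2 = c1 * v.2 + c2 * w.2.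
Proof.
move=> h; have := Uapp_coord d h (erefl _); eauto.
Qed.

Lemma v_unique (A : R * R -> Prop) alpha (a1 : nat * nat) (v w v' w' : int * int) t t' :
  alpha != (0, 0) -> is_vertex (face A alpha) (emb R a1) ->
  gcdz v.1 v.2 = 1 -> gcdz v'.1 v'.2 = 1 ->
  (v.1 * w.2 - v.2 * w.1 = 1 \/ v.1 * w.2 - v.2 * w.1 = -1) ->
  (v'.1 * w'.2 - v'.2 * w'.1 = 1 \/ v'.1 * w'.2 - v'.2 * w'.1 = -1) ->
  0 < t -> face A alpha ((emb R a1).1 + t * (embZ R v).1, (emb R a1).2 + t * (embZ R v).2) ->
  0 < t' -> face A alpha ((emb R a1).1 + t' * (embZ R v').1, (emb R a1).2 + t' * (embZ R v').2) ->
  v' = v.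
Proof.
move=> ha hv gv gv' dv dv' t0 fv t'0 fv'.
have fa := hv.1.
have pv := face_dir fa fv t0.
have pv' := face_dir fa fv' t'0.
have dR := perp_det ha pv pv'.
have dZ : v.1 * v'.2 - v.2 * v'.1 = 0.
  apply/eqP; rewrite -(intr_eq0 R) rmorphB !rmorphM /=; exact/eqP.
have detnz : forall a b : int, a = 1 \/ a = -1 -> a != 0.
  by move=> a b [->|->].
have [c1 [c2 [e1 e2]]] := decomp v' dv.
have c20 : c2 = 0.
  have : c2 * (v.1 * w.2 - v.2 * w.1) = 0 by rewrite -dZ e1 e2; ring.
  by move/eqP; rewrite mulf_eq0 (negbTE (detnz _ 0 dv)) orbF => /eqP.
have [c1' [c2' [e1' e2']]] := decomp v dv'.
have c20' : c2' = 0.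
  have : c2' * (v'.1 * w'.2 - v'.2 * w'.1) = 0.
    have dZ' : v'.1 * v.2 - v'.2 * v.1 = 0 by rewrite -[RHS]oppr0 -dZ; ring.
    by rewrite -dZ' e1' e2'; ring.
  by move/eqP; rewrite mulf_eq0 (negbTE (detnz _ 0 dv')) orbF => /eqP.
rewrite c20 mul0r addr0 in e1; rewrite c20 mul0r addr0 in e2; rewrite c20' mul0r addr0 in e1'; rewrite c20' mul0r addr0 in e2'.
have cc : c1' * c1 = 1.
  have h1 : (c1' * c1 - 1) * v.1 = 0 by rewrite mulrBl -mulrA -e1 -e1' mul1r subrr.
  have h2 : (c1' * c1 - 1) * v.2 = 0 by rewrite mulrBl -mulrA -e2 -e2' mul1r subrr.
  apply/eqP; rewrite -subr_eq0; apply/eqP.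
  case: (gcd_nz gv) => hn.
    by move/eqP: h1; rewrite mulf_eq0 (negbTE hn) orbF => /eqP.
  by move/eqP: h2; rewrite mulf_eq0 (negbTE hn) orbF => /eqP.
have c1p : 0 < c1.
  rewrite ltNge; apply/negP => c1n.
  have c1nz : c1 != 0 by apply/eqP => c0; move: cc; rewrite c0 mulr0.
  have c1neg : c1 < 0 by rewrite lt_neqAle c1nz c1n.
  have s0 : t' * c1%:~R < 0 :> R by rewrite pmulr_rlt0 // ltrz0.
  have fz : face A alpha ((emb R a1).1 + (t' * c1%:~R) * (embZ R v).1,
                          (emb R a1).2 + (t' * c1%:~R) * (embZ R v).2).
    move: fv'; rewrite /embZ /= e1 e2 !rmorphM /=.
    by rewrite !mulrA.
  have := vertex_dir hv fv fz t0 s0.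
  move/embZ0 => [h1 h2].
  by case: (gcd_nz gv); rewrite ?h1 ?h2 eqxx.
have c11 : c1 = 1.
  have : 0 < c1' by move: cc; rewrite -(pmulr_lgt0 _ c1p) => ->.
  move=> c1'p; lia.
by rewrite [v']surjective_pairing e1 e2 c11 !mul1r -surjective_pairing.
Qed.


Lemma coordR (v w : int * int) (e1 e2 : int) (b1 b2 : R) (d : int * int) :
  (v.1 * w.2 - v.2 * w.1 = 1 \/ v.1 * w.2 - v.2 * w.1 = -1) ->
  d.1 = e1 * v.1 + e2 * w.1 -> d.2 = e1 * v.2 + e2 * w.2 ->
  (embZ R d).1 = b1 * (embZ R v).1 + b2 * (embZ R w).1 ->
  (embZ R d).2 = b1 * (embZ R v).2 + b2 * (embZ R w).2 ->
  e2%:~R = b2.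
Proof.
move=> hd h1 h2; rewrite /embZ /= h1 h2 !rmorphD !rmorphM /= => k1 k2.
have dnz : (v.1%:~R * w.2%:~R - v.2%:~R * w.1%:~R : R) != 0.
  rewrite -!rmorphM -rmorphB /= intr_eq0; by case: hd => ->.
have h1' : (e1%:~R - b1) * v.1%:~R + (e2%:~R - b2) * w.1%:~R = 0 :> R.
  by rewrite !mulrBl addrACA k1 -opprD subrr.
have h2' : (e1%:~R - b1) * v.2%:~R + (e2%:~R - b2) * w.2%:~R = 0 :> R.
  by rewrite !mulrBl addrACA k2 -opprD subrr.
have [_ c2] := uniq2 dnz h1' h2'.
by apply/eqP; rewrite -subr_eq0 c2.
Qed.

Lemma Uapp_lin (U : 'M[int]_2) (v w d : int * int) e1 e2 :
  d.1 = e1 * v.1 + e2 * w.1 -> d.2 = e1 * v.2 + e2 * w.2 ->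
  Uapp U d = (e1 * (Uapp U v).1 + e2 * (Uapp U w).1, e1 * (Uapp U v).2 + e2 * (Uapp U w).2).
Proof. by rewrite /Uapp => -> -> /=; congr pair; ring. Qed.

Lemma exp_rel (v w w' : int * int) (U U' : 'M[int]_2) (S : int * int -> Prop) :
  (v.1 * w.2 - v.2 * w.1 = 1 \/ v.1 * w.2 - v.2 * w.1 = -1) ->
  (v.1 * w'.2 - v.2 * w'.1 = 1 \/ v.1 * w'.2 - v.2 * w'.1 = -1) ->
  U = (invmx (Tmat v w))^T -> U' = (invmx (Tmat v w'))^T ->
  (forall d, S d -> exists b1 b2 : R, 0 <= b1 /\ 0 <= b2 /\
     (embZ R d).1 = b1 * (embZ R v).1 + b2 * (embZ R w).1 /\
     (embZ R d).2 = b1 * (embZ R v).2 + b2 * (embZ R w).2) ->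
  (forall d, S d -> exists b1 b2 : R, 0 <= b1 /\ 0 <= b2 /\
     (embZ R d).1 = b1 * (embZ R v).1 + b2 * (embZ R w').1 /\
     (embZ R d).2 = b1 * (embZ R v).2 + b2 * (embZ R w').2) ->
  exists k : int, forall d, S d ->
    Uapp U' d = ((Uapp U d).1 - k * (Uapp U d).2, (Uapp U d).2).
Proof.
move=> dv dv' eU eU' cone cone'.
have detnz : forall a : int, a = 1 \/ a = -1 -> a != 0 by move=> a [->|->].
have [hv1 hv2] := Uapp_coord v dv' eU'.
have [a0 b0] : (Uapp U' v).1 - 1 = 0 /\ (Uapp U' v).2 = 0.
  have := @uniq2 _ ((Uapp U' v).1 - 1) ((Uapp U' v).2) v.1 v.2 w'.1 w'.2 (detnz _ dv').
  by rewrite !mulrBl !mul1r -addrAC -hv1 -addrAC -hv2 !subrr; apply.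
have Uv : Uapp U' v = (1, 0).
  by rewrite [LHS]surjective_pairing b0; move/eqP: a0; rewrite subr_eq0 => /eqP ->.
have [hw1 hw2] := Uapp_coord w dv' eU'.
have [hw'1 hw'2] := Uapp_coord w' dv eU.
set p := (Uapp U' w).1 in hw1 hw2; set r := (Uapp U' w).2 in hw1 hw2.
set p' := (Uapp U w').1 in hw'1 hw'2; set r' := (Uapp U w').2 in hw'1 hw'2.
have rr : r * r' = 1.
  have := @uniq2 _ (p + r * p') (r * r' - 1) v.1 v.2 w.1 w.2 (detnz _ dv).
  case.
  - transitivity ((p * v.1 + r * (p' * v.1 + r' * w.1)) - w.1); first ring.
    by rewrite -hw'1 -hw1 subrr.
  - transitivity ((p * v.2 + r * (p' * v.2 + r' * w.2)) - w.2); first ring.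
    by rewrite -hw'2 -hw2 subrr.
  by move=> _ /eqP; rewrite subr_eq0 => /eqP.
exists (- p) => d Sd.
have [hd1 hd2] := Uapp_coord d dv eU.
set e1 := (Uapp U d).1 in hd1 hd2 *; set e2 := (Uapp U d).2 in hd1 hd2 *.
have hl := Uapp_lin U' hd1 hd2.
rewrite Uv /= -/p -/r in hl.
have [b1 [b2 [_ [b2p [k1 k2]]]]] := cone d Sd.
have e2p : 0 <= e2.
  by rewrite -(ler0z R) (coordR dv hd1 hd2 k1 k2).
have [hd'1 hd'2] := Uapp_coord d dv' eU'.
have [b1' [b2' [_ [b2p' [k1' k2']]]]] := cone' d Sd.
have e2p' : 0 <= (Uapp U' d).2.
  by rewrite -(ler0z R) (coordR dv' hd'1 hd'2 k1' k2').
rewrite hl /= mulr0 add0r in e2p'. rewrite -/r in e2p'.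
rewrite hl; congr pair; first by rewrite /p /Uapp /=; ring.
rewrite /= mulr0 add0r -/r.
have : r = 1 \/ r = -1.
  have : r * r' = 1 := rr.
  move=> h; nia.
have er : U' 1 0 * w.1 + U' 1 1 * w.2 = r by []. rewrite er in e2p' *.
case=> rv; rewrite rv in e2p' *; first by rewrite mulr1.
have : e2 = 0 by move: e2p'; rewrite mulrN1 oppr_ge0 => h; apply/eqP; rewrite eq_le h e2p.
by move=> ->; ring.
Qed.
End G.
Section K.
Variable K : numFieldType.

Lemma qcoef (p : {poly {poly K}}) (y : K) (i j : nat) :
  (p - (y%:P)%:P)`_j`_i != 0 -> p`_j`_i != 0 \/ (i = 0 /\ j = 0)%N.
Proof.
rewrite !coefB !coefC.
case: (eqVneq p`_j`_i 0) => [->|]; last by left.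
case: j => [|j] /=; last by rewrite coef0 subr0 eqxx.
rewrite coefC; case: i => [|i] /=; first by right.
by rewrite subr0 eqxx.
Qed.

Lemma Ubar_rel (U U' : 'M[int]_2) (g : nat * nat) (p : {poly {poly K}}) (y : K) (k : int)
  (z1 z2 : K) : z1 != 0 ->
  (forall i j : nat, p`_j`_i != 0 \/ (i = 0 /\ j = 0)%N ->
     Uapp U' (i%:Z - g.1%:Z, j%:Z - g.2%:Z) =
     ((Uapp U (i%:Z - g.1%:Z, j%:Z - g.2%:Z)).1 - k * (Uapp U (i%:Z - g.1%:Z, j%:Z - g.2%:Z)).2,
      (Uapp U (i%:Z - g.1%:Z, j%:Z - g.2%:Z)).2)) ->
  Ubar_eval U' g p y (z1, z2) = Ubar_eval U g p y (z1, z2 * z1 ^ (- k)).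
Proof.
move=> z0 hrel; rewrite /Ubar_eval.
apply: eq_bigr => j _; apply: eq_bigr => i _.
case: (eqVneq (p - (y%:P)%:P)`_j`_i 0) => [->|hq]; first by rewrite !mul0r.
congr (_ * _).
rewrite (hrel _ _ (qcoef hq)) /=.
move: (U 0 0 * _ + _) (U 1 0 * _ + _) => e1 e2.
rewrite expfzMl exprz_exp expfzDr // mulNr -mulNr.
by rewrite -mulrA [z2 ^ e2 * _]mulrC.
Qed.
End K.
Section K2.
Variable K : numFieldType.

Lemma pow_bound (u : nat -> K) (rho : K) (m : int) :
  rho != 0 -> cvgK u rho ->
  exists C : K, 0 < C /\ exists N, forall n, (N <= n)%N -> `|u n ^ m| <= C.
Proof.
move=> r0 cu.
have r0' : 0 < `|rho| by rewrite normr_gt0.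
have [N hN] := cu (`|rho| / 2) (divr_gt0 r0' (ltr0Sn _ 1)).
have lo : forall n, (N <= n)%N -> `|rho| / 2 <= `|u n|.
  move=> n /hN h.
  have h1 := lerB_dist rho (u n).
  rewrite distrC in h1.
  have h2 : `|rho| - `|u n| <= `|rho| / 2 by apply: (le_trans h1); exact: ltW.
  rewrite lerBlDr in h2.
  by rewrite -(lerD2l (`|rho| / 2)) -splitr.
have hi : forall n, (N <= n)%N -> `|u n| <= `|rho| * 2.
  move=> n /hN h.
  have h1 : `|u n| <= `|u n - rho| + `|rho|.
    by rewrite -{1}(subrK rho (u n)) ler_normD.
  apply: (le_trans h1); rewrite mulrDr mulr1 lerD2r.
  apply: (le_trans (ltW h)); rewrite ler_pdivrMr ?(ltr0Sn _ 1) //.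
  by rewrite ler_peMr ?ler1n // ltW.
case: m => a.
- exists ((`|rho| * 2) ^+ a); split; first by rewrite exprn_gt0 // mulr_gt0.
  exists N => n hn; rewrite -exprnP normrX.
  apply: lerXn2r (hi n hn); rewrite qualifE /= ?normr_ge0 // mulr_ge0 // ler0n.
- exists (((`|rho| / 2) ^+ a.+1)^-1); split.
    by rewrite invr_gt0 exprn_gt0 // divr_gt0.
  exists N => n hn; rewrite NegzE -exprnN normfV normrX.
  have p1 : 0 < `|rho| / 2 by rewrite divr_gt0.
  have p2 : 0 < `|u n| by apply: lt_le_trans p1 (lo n hn).
  rewrite lef_pV2 ?qualifE /= ?exprn_gt0 //.
  apply: lerXn2r (lo n hn); rewrite qualifE /= ltW //.
Qed.

Lemma cvg_mulpow (u w : nat -> K) (rho : K) (m : int) :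
  rho != 0 -> cvgK u rho -> cvgK w 0 -> cvgK (fun n => w n * u n ^ m) 0.
Proof.
move=> r0 cu cw e e0.
have [C [C0 [N0 hC]]] := pow_bound m r0 cu.
have [N1 hN1] := cw (e / C) (divr_gt0 e0 C0).
exists (maxn N0 N1) => n hn.
have hn0 : (N0 <= n)%N by apply: leq_trans hn; exact: leq_maxl.
have hn1 : (N1 <= n)%N by apply: leq_trans hn; exact: leq_maxr.
have := hN1 n hn1; rewrite subr0 => hw.
rewrite subr0 normrM.
apply: (le_lt_trans (ler_wpM2l (normr_ge0 _) (hC n hn0))).
by rewrite -ltr_pdivlMr.
Qed.


Lemma TF_transfer (U U' : 'M[int]_2) g1 g2 (f1 f2 : {poly {poly K}}) (k : int) :
  (forall (y : K * K) (z1 z2 : K), z1 != 0 ->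
     Ubar_eval U' g1 f1 y.1 (z1, z2) = Ubar_eval U g1 f1 y.1 (z1, z2 * z1 ^ (- k)) /\
     Ubar_eval U' g2 f2 y.2 (z1, z2) = Ubar_eval U g2 f2 y.2 (z1, z2 * z1 ^ (- k))) ->
  forall y, TF U' g1 g2 f1 f2 y -> TF U g1 g2 f1 f2 y.
Proof.
move=> hrel y [rho [[r0 [yt [hz1 hz2]]] hTF]].
have Z : forall s, Ubar_zero U' g1 g2 f1 f2 s (rho, 0) -> Ubar_zero U g1 g2 f1 f2 s (rho, 0).
  move=> s [h1 h2]; have [e1 e2] := hrel s rho 0 r0.
  by split; [move: e1; rewrite mul0r => <- | move: e2; rewrite mul0r => <-].
exists rho; split.
  by split=> //; exists yt; apply: Z.
move=> e e0; have [s [[hs [vr [ys [hnz [c1 [c2 [c3 [c4 hv]]]]]]]] hd]] := hTF e e0.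
exists s; split=> //; split; first exact: Z.
exists (fun n => ((vr n).1, (vr n).2 * (vr n).1 ^ (- k))), ys.
split.
  move=> n; have [a b] := hnz n; split=> //=.
  by rewrite mulf_neq0 // expfz_neq0.
split=> //; split.
  exact: (cvg_mulpow (u := fun n => (vr n).1) (w := fun n => (vr n).2) (- k) r0 c1 c2).
do 2 (split=> //).
move=> n; have [a b] := hnz n.
have [e1 e2] := hrel (ys n) (vr n).1 (vr n).2 a.
have [h1 h2] := hv n; move: h1 h2; rewrite [vr n]surjective_pairing.
by rewrite /Ubar_zero e1 e2.
Qed.
End K2.
Section M.
Variable R : realType.

Lemma NP_pt (K : numFieldType) (p : {poly {poly K}}) (a : nat * nat) :
  coef2 p a != 0 -> NP p (emb R a).
Proof.
move=> h; exists 1%N, (fun _ => 1), (fun _ => emb R a).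
split=> //; split; first by rewrite big_ord1.
split; first by move=> _; exists a.
by rewrite !big_ord1 !mul1r -surjective_pairing.
Qed.

Lemma cone_pt (A : R * R -> Prop) (a1 g g' : nat * nat) (v w : int * int) (i j : nat) :
  (forall x, A x -> exists b1 b2 : R, 0 <= b1 /\ 0 <= b2 /\
       x.1 - (emb R a1).1 = b1 * (embZ R v).1 + b2 * (embZ R w).1 /\
       x.2 - (emb R a1).2 = b1 * (embZ R v).2 + b2 * (embZ R w).2) ->
  A ((i%:R : R) + (emb R g).1, (j%:R : R) + (emb R g).2) ->
  (g'.1 + g.1, g'.2 + g.2)%N = a1 ->
  exists b1 b2 : R, 0 <= b1 /\ 0 <= b2 /\
     (embZ R (i%:Z - g'.1%:Z, j%:Z - g'.2%:Z)).1 = b1 * (embZ R v).1 + b2 * (embZ R w).1 /\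
     (embZ R (i%:Z - g'.1%:Z, j%:Z - g'.2%:Z)).2 = b1 * (embZ R v).2 + b2 * (embZ R w).2.
Proof.
move=> cone hA ea; have [b1 [b2 [p1 [p2 [k1 k2]]]]] := cone _ hA.
exists b1, b2; split=> //; split=> //.
move: k1 k2; rewrite -ea /emb /embZ /= !natrD !rmorphB /=.
by split; [rewrite -k1 | rewrite -k2]; ring.
Qed.
End M.

Theorem lemma4p2 (R : realType) (isC : bool)
  (f1 f2 : {poly {poly Kfield R isC}}) (alpha : R * R)
  (a1 g1 g2 : nat * nat) (U U' : 'M[int]_2) :
  let A := msum (NP f1) (NP f2) in
  let Gamma := face A alpha in
  let Gamma1 := face (NP f1) alpha in
  let Gamma2 := face (NP f2) alpha in
  dominant f1 f2 ->
  coef2 f1 (0%N, 0%N) != 0 -> coef2 f2 (0%N, 0%N) != 0 ->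
  is_edge A alpha ->
  (* a1 : a vertex of Gamma of minimal Euclidean norm *)
  is_vertex Gamma (emb R a1) ->
  (forall b, is_vertex Gamma b -> norm2 (emb R a1) <= norm2 b) ->
  (* gamma_i : vertices of Gamma_i with gamma_1 + gamma_2 = a1 *)
  is_vertex Gamma1 (emb R g1) -> is_vertex Gamma2 (emb R g2) ->
  (g1.1 + g2.1, g1.2 + g2.2)%N = a1 ->
  TGamma A Gamma a1 U -> TGamma A Gamma a1 U' ->
  forall y : Kfield R isC * Kfield R isC,
    TF U g1 g2 f1 f2 y <-> TF U' g1 g2 f1 f2 y.
Proof.
move=> A Gamma Gamma1 Gamma2 _ c1 c2 hedge hv _ hg1 hg2 ea hU hU'.
case: hU => v [w [gv [[t [t0 Gt]] [dv [cone eU]]]]].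
case: hU' => v' [w' [gv' [[t' [t0' Gt']] [dv' [cone' eU']]]]].
have ev : v' = v := v_unique (proj1 hedge) hv gv gv' dv dv' t0 Gt t0' Gt'.
subst v'.
have NPg1 : NP f1 (emb R g1) := hg1.1.1.
have NPg2 : NP f2 (emb R g2) := hg2.1.1.
pose S := fun d : int * int => exists i j : nat,
  ((f1`_j`_i != 0 \/ (i = 0 /\ j = 0)%N) /\ d = (i%:Z - g1.1%:Z, j%:Z - g1.2%:Z)) \/
  ((f2`_j`_i != 0 \/ (i = 0 /\ j = 0)%N) /\ d = (i%:Z - g2.1%:Z, j%:Z - g2.2%:Z)).
have coneS : forall w0 : int * int,
  (forall x, A x -> exists b1 b2 : R, 0 <= b1 /\ 0 <= b2 /\
       x.1 - (emb R a1).1 = b1 * (embZ R v).1 + b2 * (embZ R w0).1 /\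
       x.2 - (emb R a1).2 = b1 * (embZ R v).2 + b2 * (embZ R w0).2) ->
  forall d, S d -> exists b1 b2 : R, 0 <= b1 /\ 0 <= b2 /\
     (embZ R d).1 = b1 * (embZ R v).1 + b2 * (embZ R w0).1 /\
     (embZ R d).2 = b1 * (embZ R v).2 + b2 * (embZ R w0).2.
  move=> w0 cone0 d [i [j [[hc ->]|[hc ->]]]].
  - have hc' : coef2 f1 (i, j) != 0.
      by case: hc => // -[-> ->].
    apply: (cone_pt cone0 _ ea).
    by exists (emb R (i, j)), (emb R g2); split; [exact: NP_pt|split].
  - have hc' : coef2 f2 (i, j) != 0.
      by case: hc => // -[-> ->].
    have ea' : (g2.1 + g1.1, g2.2 + g1.2)%N = a1 by rewrite addnC [(g2.2 + _)%N]addnC.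
    apply: (cone_pt cone0 _ ea').
    exists (emb R g1), (emb R (i, j)); split=> //; split; first exact: NP_pt.
    by rewrite /= (addrC (i%:R)) (addrC (j%:R)).
have hS1 : forall i j : nat, f1`_j`_i != 0 \/ (i = 0 /\ j = 0)%N ->
    S (i%:Z - g1.1%:Z, j%:Z - g1.2%:Z).
  by move=> i j h; exists i, j; left.
have hS2 : forall i j : nat, f2`_j`_i != 0 \/ (i = 0 /\ j = 0)%N ->
    S (i%:Z - g2.1%:Z, j%:Z - g2.2%:Z).
  by move=> i j h; exists i, j; right.
have [k hk] := exp_rel dv dv' eU eU' (coneS w cone) (coneS w' cone').
have [k' hk'] := exp_rel dv' dv eU' eU (coneS w' cone') (coneS w cone).
move=> y; split.
- apply: (TF_transfer (U := U') (U' := U) (k := k')) => y0 z1 z2 z0.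
  by split; apply: Ubar_rel => // i j h; apply: hk'; [apply: hS1|apply: hS2].
- apply: (TF_transfer (U := U) (U' := U') (k := k)) => y0 z1 z2 z0.
  by split; apply: Ubar_rel => // i j h; apply: hk; [apply: hS1|apply: hS2].
Qed.
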